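(* Let $G$ be a finite $p$-group and let $N, C_1, C_2$ be normal subgroups of $G$ with $C_1\subseteq C_2$. Let $P:=\{g\in N : [g,C_2]\subseteq[C_1,N]\}$. Then: (1) $\{g\in N : b_{C_1}(g)\geq b_{C_2}(g)\}\subseteq P$; (2) $P$ is a normal subgroup of $G$; (3) if $P=N$, then $[C_1,N]=[C_2,N]$.
   Context: Commutators are $[x,y]=x^{-1}y^{-1}xy$; for $g\in G$ and a subgroup $H$, $[g,H]=\{[g,h]:h\in H\}$; for subgroups $G_1,G_2$, $[G_1,G_2]$ is the subgroup generated by all $[g_1,g_2]$, $g_i\in G_i$. For a subgroup $K$ of $G$ and $g\in G$, $b_K(g):=\log_p|K:K\cap Z_G(g)|$, where $Z_G(g)$ is the centralizer of $g$ in $G$. *)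

(* Defs.v *)
From mathcomp Require Import all_boot all_fingroup all_solvable.
Set Implicit Arguments. Unset Strict Implicit. Unset Printing Implicit Defensive.
Local Open Scope group_scope.

Definition bK (gT : finGroupType) (p : nat) (G K : {set gT}) (g : gT) : nat :=
  logn p #|K : K :&: 'C_G[g]|.

(* [g, H] = { [g,h] : h in H }; MathComp's [~ x, y] = x^-1 * y^-1 * x * y *)
Definition commset (gT : finGroupType) (g : gT) (H : {set gT}) : {set gT} :=
  [set [~ g, h] | h in H].

(* Main.v *)
Require Import Defs.
From mathcomp Require Import all_boot all_fingroup all_solvable.
Local Open Scope group_scope.

Lemma card_commset (gT : finGroupType) (p : nat) (G K : {group gT}) (g : gT) :
  p.-group G -> K \subset G -> #|commset g K| = (p ^ bK p G K g)%N.
Proof.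
move=> pG sKG.
have -> : commset g K = (mulg g^-1) @: (g ^: K).
  rewrite /commset -imset_comp; apply: eq_imset => h /=.
  by rewrite commgEl.
rewrite card_imset; last exact: mulgI.
rewrite /bK setIA (setIidPl sKG) index_cent1 -p_part part_pnat_id //.
rewrite -index_cent1; apply: pnat_dvd (dvdn_indexg _ _) _.
exact: pgroupS sKG pG.
Qed.

Theorem lemma1 (gT : finGroupType) (p : nat) (G N C1 C2 : {group gT}) :
  prime p -> p.-group G -> N <| G -> C1 <| G -> C2 <| G -> C1 \subset C2 ->
  let P := [set g in N | commset g C2 \subset [~: C1, N]] in
  [/\ [set g in N | bK p G C2 g <= bK p G C1 g] \subset P,
      group_set P && (P <| G)
    & P = N -> [~: C1, N] = [~: C2, N]].
Proof.
move=> pr_p pG /andP[sNG nNG] /andP[sC1G nC1G] /andP[sC2G nC2G] sC12 P.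
set M := [~: C1, N].
have nMG : G \subset 'N(M) by apply: normsR.
have comM : forall g c, g \in N -> c \in C1 -> [~ g, c] \in M.
  by move=> g c Ng Cc; rewrite -invgR groupV mem_commg.
have PP : forall g, (g \in P) = (g \in N) && [forall c in C2, [~ g, c] \in M].
  move=> g; rewrite inE; congr (_ && _).
  apply/subsetP/forall_inP => H.
    by move=> c Cc; apply: H; apply/imsetP; exists c.
  by move=> _ /imsetP[c Cc ->]; apply: H.
split.
- apply/subsetP => g; rewrite inE => /andP[Ng le].
  rewrite inE Ng /=.
  have sub : commset g C1 \subset commset g C2 by apply: imsetS.
  have -> : commset g C2 = commset g C1.
    apply/esym/eqP; rewrite eqEcard sub /=.
    rewrite !(card_commset _ _ _ _ _ pG) // leq_exp2l //; exact: prime_gt1.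
  by apply/subsetP => _ /imsetP[c Cc ->]; apply: comM.
- have sPN : P \subset N by apply/subsetP => g; rewrite inE => /andP[].
  have gP : group_set P.
    apply/group_setP; split.
      by rewrite PP group1; apply/forall_inP => c _; rewrite comm1g group1.
    move=> x y; rewrite !PP => /andP[Nx /forall_inP Hx] /andP[Ny /forall_inP Hy].
    rewrite groupM //; apply/forall_inP => c Cc.
    rewrite commMgJ groupM ?Hy // memJ_norm ?Hx //.
    by apply: (subsetP nMG); apply: (subsetP sNG).
  rewrite gP /normal (subset_trans sPN sNG) /=.
  have conjP : forall z x, z \in P -> x \in G -> z ^ x \in P.
    move=> z x; rewrite !PP => /andP[Nz /forall_inP Hz] Gx.
    rewrite (memJ_norm z (subsetP nNG x Gx)) Nz /=; apply/forall_inP => c Cc.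
    have -> : c = (c ^ x^-1) ^ x by rewrite conjgKV.
    rewrite -conjRg memJ_norm ?(subsetP nMG) // Hz //.
    by rewrite memJ_norm // (subsetP nC2G) // groupV.
  apply/subsetP => x Gx; rewrite inE; apply/subsetP => y; rewrite mem_conjg => Py.
  by rewrite -(conjgKV x y); apply: conjP => //; rewrite groupV.
- move=> PN; apply/eqP; rewrite eqEsubset commSg //=.
  rewrite commGC gen_subG; apply/subsetP => _ /imset2P[g c Ng Cc ->].
  have : g \in P by rewrite PN.
  by rewrite PP => /andP[_ /forall_inP]; apply.
Qed.
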